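(* Let $q$ be a prime power, $k=\mathbb{F}_q(T)$, $N\in\mathbb{F}_q[T]\setminus\{0\}$, and let $L_1,L_2$ be subfields of the cyclotomic function field $k(\Lambda_N)$ containing $k$. Put $L:=L_1L_2$, $L^+:=L\cap k(\Lambda_N)^+$ and $L_i^+:=L_i\cap k(\Lambda_N)^+$ for $i=1,2$. Then $[L^+:L_1^+L_2^+]$ divides $q-1$.
   Context: $k(\Lambda_N)$ is the $N$-th cyclotomic function field, generated over $k$ by the $N$-torsion of the Carlitz module; its Galois group over $k$ is $(\mathbb{F}_q[T]/(N))^*$, which contains $\mathbb{F}_q^*$ as a subgroup. $k(\Lambda_N)^+$ denotes the fixed field of $\mathbb{F}_q^*$ (the maximal real subfield). *)

(* Defs.v *)
From HB Require Import structures.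
From mathcomp Require Import all_boot all_order all_algebra all_field.
From mathcomp Require Import fraction boolp.
Set Implicit Arguments. Unset Strict Implicit. Unset Printing Implicit Defensive.
Import GRing.Theory.
Local Open Scope ring_scope.

(* k = F_q(T), the fraction field of F_q[T], for a finite field F (q = #|F|). *)
Definition kfield (F : finFieldType) := {fraction {poly F}}.

Definition kT (F : finFieldType) : kfield F := @FracField.tofrac _ ('X : {poly F}).

Definition kofpoly (F : finFieldType) (a : {poly F}) : kfield F := @FracField.tofrac _ a.

Definition kofF (F : finFieldType) (a : F) : kfield F := kofpoly (a%:P).

Definition carlitzT (F : finFieldType) : {poly kfield F} :=
  (kT F)%:P * 'X + 'X^#|F|.

Definition carlitz_pow (F : finFieldType) (i : nat) : {poly kfield F} :=
  iter i (fun p => carlitzT F \Po p) 'X.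

Definition carlitz (F : finFieldType) (N : {poly F}) : {poly kfield F} :=
  \sum_(i < size N) kofF N`_i *: carlitz_pow F i.

(* E is (a model of) the cyclotomic function field k(Lambda_N): the splitting
   field over k of C_N, i.e. the field generated over k by the N-torsion. *)
Definition is_cyclotomic_field (F : finFieldType) (N : {poly F})
    (E : splittingFieldType (kfield F)) : Prop :=
  splittingFieldFor 1%AS (map_poly (in_alg E) (carlitz N)) fullv.

(* The subgroup F_q^* of Gal(k(Lambda_N)/k) = (F_q[T]/N)^*: the automorphisms
   acting on Lambda_N as lambda |-> C_a(lambda) = a lambda for some a in F_q^*. *)
Definition constant_subgroup (F : finFieldType) (N : {poly F})
    (E : splittingFieldType (kfield F)) : {set gal_of (fullv : {vspace E})} :=
  [set g : gal_of (fullv : {vspace E}) |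
    `[< exists a : F, a != 0 /\
        forall x : E, root (map_poly (in_alg E) (carlitz N)) x ->
          (g : 'AEnd(E)) x = (kofF a)%:A * x >]].

Definition real_subfield (F : finFieldType) (N : {poly F})
    (E : splittingFieldType (kfield F)) : {subfield E} :=
  fixedField_aspace (constant_subgroup N E).

(* Main.v *)
Require Import Defs.
From HB Require Import structures.
From mathcomp Require Import all_boot all_order all_algebra all_field.
From mathcomp Require Import fraction boolp.
From mathcomp Require Import all_fingroup.
Set Implicit Arguments. Unset Strict Implicit. Unset Printing Implicit Defensive.
Import GRing.Theory.

Open Scope group_scope.
Lemma grp_key (gT : finGroupType) (A B H : {group gT}) :
  (H \subset 'C([set: gT]))%g ->
  (#| (A <*> H) :&: (B <*> H) : (A :&: B) <*> H |%g %| #|H|)%N.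
Proof.
move=> cH.
have cX (Y : {set gT}) : H \subset 'C(Y) by apply: subset_trans cH (centS _); apply: subsetT.
rewrite [A <*> H]cent_joinEr ?cX // [B <*> H]cent_joinEr ?cX //.
have sBBH : B \subset B * H by apply: mulg_subl; apply: group1.
have -> : A * H :&: B * H = (B <*> H :&: A) * H.
  by rewrite group_modr ?joing_subr // setIC /= cent_joinEr ?cX.
set X := (B <*> H :&: A)%G.
have sABX : A :&: B \subset X.
  by rewrite /= cent_joinEr ?cX // subsetI subsetIl andbT; apply: subset_trans sBBH; apply: subsetIr.
have -> : X * H = ((A :&: B) <*> H) * X.
  by rewrite (cent_joinEr (cX _)) -mulgA (centC (cX X)) mulgA (mulSGid sABX).
rewrite (indexMg ((A :&: B) <*> H)%G X).
apply: dvdn_trans (indexgS X (joing_subl (A :&: B) H)) _.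
have sXA : X \subset A by apply: subsetIr.
have -> : #|X : A :&: B| = #|X : B|.
  by rewrite -[LHS]indexgI -[RHS]indexgI setIA (setIidPl sXA).
have nBX : X \subset 'N(B).
  apply: subset_trans (subsetIl _ _) _.
  by rewrite /= cent_joinEr ?cX // mul_subG ?normG ?cents_norm ?cX.
rewrite -indexMg -norm_joinEr //.
apply: dvdn_trans (indexSg (joing_subl B X) (_ : B <*> X \subset B <*> H)) _.
  by rewrite join_subG joing_subl /= cent_joinEr ?cX // subsetIl.
by rewrite /= cent_joinEr ?cX // indexMg dvdn_indexg.
Qed.

Close Scope group_scope.
Open Scope ring_scope.
Lemma natr_card0 (F : finFieldType) : (#|F|%:R : F) = 0.
Proof.
have h : \sum_(x : F) (x + 1) = \sum_(x : F) x.
  by rewrite [RHS](reindex_inj (@addIr _ 1)).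
move: h; rewrite big_split /= sumr_const.
move/eqP; rewrite -[X in _ == X]addr0 => /eqP /addrI.
by [].
Qed.
Close Scope ring_scope.

Open Scope ring_scope.
Lemma kq0 (F : finFieldType) : (#|F|%:R : kfield F) = 0.
Proof.
have : kofF (#|F|%:R : F) = #|F|%:R by rewrite /kofF /kofpoly !rmorph_nat.
by rewrite natr_card0 /kofF /kofpoly polyC0 rmorph0 => <-.
Qed.

Lemma carlitzT_deriv (F : finFieldType) : (carlitzT F)^`() = (kT F)%:P.
Proof.
rewrite /carlitzT derivD mul_polyC derivZ derivX derivXn -mulr_natr.
by rewrite -polyC_natr kq0 mulr0 addr0 alg_polyC.
Qed.

Lemma carlitz_pow_deriv (F : finFieldType) (i : nat) :
  (carlitz_pow F i)^`() = (kT F ^+ i)%:P.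
Proof.
elim: i => [|i IH]; first by rewrite /carlitz_pow /= derivX expr0.
rewrite /carlitz_pow iterS -/(carlitz_pow F i) deriv_comp carlitzT_deriv IH.
by rewrite comp_polyC -polyCM exprS.
Qed.

Lemma carlitz_deriv (F : finFieldType) (N : {poly F}) :
  (carlitz N)^`() = (kofpoly N)%:P.
Proof.
rewrite /carlitz raddf_sum.
under eq_bigr => i _ do rewrite /= derivZ carlitz_pow_deriv -mul_polyC -polyCM.
rewrite -rmorph_sum; congr (_%:P).
rewrite /kofpoly -[in RHS](coefK N) poly_def rmorph_sum; apply: eq_bigr => i _.
by rewrite -mul_polyC rmorphM rmorphXn.
Qed.
Close Scope ring_scope.

Lemma carlitz_galois (F : finFieldType) (N : {poly F}) (N_neq0 : N != 0%R)
    (E : splittingFieldType (kfield F)) (hE : is_cyclotomic_field N E) :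
  galois 1 (fullv : {vspace E}).
Proof.
apply/splitting_galoisField; exists (map_poly (in_alg E) (carlitz N)); split => //.
  by apply/polyOver1P; exists (carlitz N).
rewrite separable_map unlock carlitz_deriv.
rewrite (eqp_coprimepr _ (_ : _ %= 1)%R) ?coprimep1 // polyC_eqp1.
by rewrite /kofpoly tofrac_eq0.
Qed.

Lemma gal_root (F : finFieldType) (N : {poly F})
    (E : splittingFieldType (kfield F)) (g : gal_of (fullv : {vspace E})) (r : E) :
  root (map_poly (in_alg E) (carlitz N)) r ->
  root (map_poly (in_alg E) (carlitz N)) (g r).
Proof.
set p := map_poly _ _ => pr.
have p1 : p \is a polyOver 1%VS by apply/polyOver1P; exists (carlitz N).
have gG : g \in ('Gal(fullv / 1%VS))%g by rewrite gal_kHom ?sub1v ?k1AHom.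
rewrite -{1}(fixedPoly_gal (sub1v _) gG p1).
apply: (kHom_root (k1AHom _ _)) => //; first by apply/polyOverP => i; exact: memvf.
exact: memvf.
Qed.

Lemma gal_eq_roots (F : finFieldType) (N : {poly F})
    (E : splittingFieldType (kfield F)) (hE : is_cyclotomic_field N E)
    (x y : gal_of (fullv : {vspace E})) :
  (forall r, root (map_poly (in_alg E) (carlitz N)) r -> x r = y r) -> x = y.
Proof.
move=> hxy; have [rs Dp defE] := hE.
have rsr r : r \in rs -> root (map_poly (in_alg E) (carlitz N)) r.
  by move=> rr; rewrite (eqp_root Dp) root_prod_XsubC.
set z := (x * y^-1)%g.
have sub : (<<1 & rs>> <= fixedField [set z])%VS.
  apply/Fadjoin_seqP; split; first exact: sub1v.
  move=> r /rsr pr; apply/fixedFieldP; first exact: memvf.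
  move=> w; rewrite inE => /eqP ->.
  by rewrite /z galM ?memvf // hxy // -galM ?memvf // mulgV gal_id.
apply/eqP/gal_eqP => a _.
have Ha : a \in <<1 & rs>>%VS by rewrite defE memvf.
have /mem_fixedFieldP[_ za] := subvP sub a Ha.
rewrite -[x](mulgKV y) galM ?memvf // za //; exact: set11.
Qed.

Lemma S_central (F : finFieldType) (N : {poly F}) (N_neq0 : N != 0%R)
    (E : splittingFieldType (kfield F)) (hE : is_cyclotomic_field N E) :
  (<<constant_subgroup N E>> \subset 'C([set: gal_of (fullv : {vspace E})]))%g.
Proof.
rewrite gen_subG; apply/subsetP => s; rewrite inE => /asboolP [a [a0 hs]].
apply/centP => g _; apply: (gal_eq_roots hE) => r pr.
rewrite !galM ?memvf // (hs r pr) (hs _ (gal_root _ pr)).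
by rewrite -!scalerAl !mul1r linearZ.
Qed.

Open Scope ring_scope.
Lemma S_card (F : finFieldType) (N : {poly F}) (N_neq0 : N != 0%R)
    (E : splittingFieldType (kfield F)) (hE : is_cyclotomic_field N E) :
  (#|<<constant_subgroup N E>>%g| %| #|F|.-1)%N.
Proof.
set p := map_poly (in_alg E) (carlitz N).
pose act (u : {unit F}) (g : gal_of (fullv : {vspace E})) :=
  `[< forall x : E, root p x -> g x = (kofF (val u))%:A * x >].
pose f (u : {unit F}) : gal_of (fullv : {vspace E}) := odflt 1%g [pick g | act u g].
pose D := [set u : {unit F} | [exists g, act u g]].
have fP u : u \in D -> act u (f u).
  rewrite inE => /existsP[g hg]; rewrite /f; case: pickP => [h hh | none] //=.
  by move: (none g); rewrite hg.
have kofFM (a b : F) : kofF (a * b) = kofF a * kofF b.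
  by rewrite /kofF /kofpoly polyCM rmorphM.
have kofF1 : kofF (1 : F) = 1 by rewrite /kofF /kofpoly polyC1 rmorph1.
have actM u v : act u (f u) -> act v (f v) -> act (u * v)%g (f u * f v)%g.
  move=> /asboolP hu /asboolP hv; apply/asboolP => x px.
  rewrite galM ?memvf // hu // -!scalerAl !mul1r linearZ /= hv // -!scalerAl !mul1r.
  by rewrite scalerA -kofFM.
have Dgrp : group_set D.
  apply/group_setP; split.
    rewrite inE; apply/existsP; exists 1%g; apply/asboolP => x _.
    by rewrite gal_id kofF1 scale1r mul1r.
  move=> u v uD vD; rewrite inE; apply/existsP; exists (f u * f v)%g.
  exact: actM (fP u uD) (fP v vD).
pose DG := Group Dgrp.
have fM : {in DG &, {morph f : x y / (x * y)%g}}.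
  move=> u v uD vD /=; apply: (gal_eq_roots hE) => r pr.
  have /asboolP h1 := fP _ (groupM uD vD).
  have /asboolP h2 := actM _ _ (fP _ uD) (fP _ vD).
  by rewrite h1 // h2.
pose fm := Morphism fM.
have SsubIm : (constant_subgroup N E \subset fm @* DG)%g.
  apply/subsetP => s; rewrite inE => /asboolP[a [a0 hs]].
  have ua : a \is a GRing.unit by rewrite unitfE.
  pose u : {unit F} := Sub a ua.
  have uD : u \in DG.
    rewrite inE; apply/existsP; exists s; apply/asboolP => x px; exact: hs.
  have -> : s = fm u.
    apply: (gal_eq_roots hE) => r pr; have /asboolP h := fP u uD.
    by rewrite /= h // hs.
  exact: mem_morphim.
have : (<<constant_subgroup N E>> \subset fm @* DG)%g by rewrite gen_subG.
move/cardSg => h; apply: dvdn_trans h _; apply: dvdn_trans (dvdn_morphim fm DG) _.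
rewrite -card_finField_unit; apply: cardSg; exact: subsetT.
Qed.

Close Scope ring_scope.
Theorem proposition5p1 (F : finFieldType) (N : {poly F}) (N_neq0 : N != 0%R)
    (E : splittingFieldType (kfield F)) (hE : is_cyclotomic_field N E)
    (L1 L2 : {subfield E}) :
  let Ep := real_subfield N E in
  let L := (L1 * L2)%AS in
  let Lp := (L :&: Ep)%AS in
  let L1p := (L1 :&: Ep)%AS in
  let L2p := (L2 :&: Ep)%AS in
  (\dim_(L1p * L2p)%AS Lp %| #|F|.-1)%N.
Proof.
cbv zeta.
set Ep := real_subfield N E.
set L := (L1 * L2)%AS.
set Lp := (L :&: Ep)%AS.
set L1p := (L1 :&: Ep)%AS.
set L2p := (L2 :&: Ep)%AS.
have galE := carlitz_galois N_neq0 hE.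
have galK (K : {subfield E}) : galois K fullv.
  by apply: galoisS galE; rewrite sub1v subvf.
have fixK (K : {subfield E}) : fixedField ('Gal(fullv / K))%g = K.
  exact/galois_fixedField/galK.
have GcapE (X Y : {subfield E}) :
    ('Gal(fullv / (X :&: Y)%AS))%g = ('Gal(fullv / X) <*> 'Gal(fullv / Y))%g.
  apply/eqP; rewrite eqEsubset join_subG !galS ?capvSl ?capvSr //=.
  set J := ('Gal(fullv / X) <*> 'Gal(fullv / Y))%G.
  have -> : (J : {set _}) = 'Gal(fullv / fixedField J)%g by rewrite gal_fixedField.
  rewrite andbT; apply: galS; rewrite subv_cap; apply/andP; split.
    by rewrite -[X in (_ <= X)%VS](fixK X) fixedFieldS ?joing_subl.
  by rewrite -[X in (_ <= X)%VS](fixK Y) fixedFieldS ?joing_subr.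
have GprodE (X Y : {subfield E}) :
    ('Gal(fullv / (X * Y)%AS))%g = ('Gal(fullv / X) :&: 'Gal(fullv / Y))%g.
  apply/setP => x; rewrite inE -!sub1set !galois_connection ?subvf //.
  apply/idP/andP => [sXY | [sX sY]]; last exact: prodv_sub.
  by split; apply: subv_trans sXY; rewrite ?field_subvMr ?field_subvMl.
have GEp : ('Gal(fullv / Ep))%g = <<constant_subgroup N E>>%g := gal_generated _.
have sM : ((L1p * L2p)%AS <= Lp)%VS.
  by apply: prodv_sub; apply: capvS; rewrite ?subvv ?field_subvMr ?field_subvMl.
have -> : \dim_(L1p * L2p)%AS Lp =
    #|'Gal(fullv / (L1p * L2p)%AS) : 'Gal(fullv / Lp)|%g.
  by rewrite -{1}(fixK Lp) (dim_fixed_galois (galK _) (galS _ sM)).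
rewrite GprodE !GcapE GEp GprodE.
apply: dvdn_trans (S_card N_neq0 hE).
exact: (grp_key ('Gal(fullv / L1))%G ('Gal(fullv / L2))%G (S_central N_neq0 hE)).
Qed.
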